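(* Let $\omega\in\mathcal{F}^1(\mathbb{P}^n,e)$. Then $\mathscr{C}(\omega)=J\subseteq I\subseteq K$.
   Context: $S=\mathbb{C}[x_0,\ldots,x_n]$, $R=\sum x_i\partial/\partial x_i$. $\mathcal{F}^1(\mathbb{P}^n,e)$ ($e\ge2$) is the set of (classes up to scalar of) $\omega=\sum A_i dx_i$, $A_i\in S$ homogeneous of degree $e-1$, not all zero, with $i_R\omega=0$, $\omega\wedge d\omega=0$ and zero locus in $\mathbb{P}^n$ of codimension $\ge2$. $\mathscr{C}(\eta)$ is the ideal generated by the coefficients of a form $\eta$. $J=\{i_X\omega: X\text{ polynomial vector field}\}$; $I=\{h\in S: h\,d\omega=\omega\wedge\eta\text{ for some polynomial 1-form }\eta\}$; $K=(J\cdot\Omega^2_S:d\omega)=\{a\in S: a\,d\omega\in J\cdot\Omega^2_S\}$. *)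

(* Defs.v *)
From HB Require Import structures.
From mathcomp Require Import all_boot all_algebra.
From mathcomp Require Import Rstruct.
From mathcomp Require Import complex.
From mathcomp Require Import mpoly.

Set Implicit Arguments.
Unset Strict Implicit.
Unset Printing Implicit Defensive.

Import GRing.Theory.
Local Open Scope ring_scope.

Definition CC : fieldType := complex Rdefinitions.R.

Definition S (n : nat) := {mpoly CC[n.+1]}.

(* A polynomial 1-form  sum_i A_i dx_i  is given by its coefficients A_i. *)
Definition form1 (n : nat) := 'I_n.+1 -> S n.

(* A polynomial 2-form  sum_{i<j} b_ij dx_i /\ dx_j  is given by its
   antisymmetric coefficient function (b_ij for all i, j, with b_ji = - b_ij). *)
Definition form2 (n : nat) := 'I_n.+1 -> 'I_n.+1 -> S n.

Definition contr1 n (X : 'I_n.+1 -> S n) (w : form1 n) : S n :=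
  \sum_(i < n.+1) X i * w i.

Definition radial n : 'I_n.+1 -> S n := fun i => 'X_i.

(* Exterior derivative of a 1-form:
   d(sum_j A_j dx_j) = sum_{i<j} (dA_j/dx_i - dA_i/dx_j) dx_i /\ dx_j. *)
Definition d1 n (w : form1 n) : form2 n :=
  fun i j => mderiv i (w j) - mderiv j (w i).

Definition wedge11 n (w v : form1 n) : form2 n :=
  fun i j => w i * v j - w j * v i.

(* Wedge product of a 1-form and a 2-form (coefficient of dx_i/\dx_j/\dx_k). *)
Definition wedge12 n (w : form1 n) (b : form2 n) (i j k : 'I_n.+1) : S n :=
  w i * b j k - w j * b i k + w k * b i j.

Definition is_ideal n (P : S n -> Prop) : Prop :=
  P 0 /\ (forall a b, P a -> P b -> P (a + b)) /\ (forall r a, P a -> P (r * a)).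

Definition is_prime_ideal n (P : S n -> Prop) : Prop :=
  is_ideal P /\ ~ P 1 /\ (forall a b, P (a * b) -> P a \/ P b).

Definition ideal_gen n (G : S n -> Prop) : S n -> Prop :=
  fun x => forall P, is_ideal P -> (forall g, G g -> P g) -> P x.

Definition strict_sub n (P Q : S n -> Prop) : Prop :=
  (forall x, P x -> Q x) /\ exists x, Q x /\ ~ P x.

Definition height_ge2 n (P : S n -> Prop) : Prop :=
  exists P0 P1, is_prime_ideal P0 /\ is_prime_ideal P1 /\
    strict_sub P0 P1 /\ strict_sub P1 P.

(* The zero locus of w (the common zeros of its coefficients A_i) has
   codimension >= 2: the ideal (A_0,...,A_n) has height >= 2, i.e. every prime
   ideal containing all A_i has height >= 2. *)
Definition zero_locus_codim_ge2 n (w : form1 n) : Prop :=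
  forall P, is_prime_ideal P -> (forall i, P (w i)) -> height_ge2 P.

Definition in_F1 n (e : nat) (w : form1 n) : Prop :=
  (2 <= e)%N /\
  (forall i, w i \is (e.-1).-homog) /\
  (exists i, w i != 0) /\
  contr1 (@radial n) w = 0 /\
  (forall i j k, wedge12 w (d1 w) i j k = 0) /\
  zero_locus_codim_ge2 w.

Definition Cideal n (w : form1 n) : S n -> Prop :=
  ideal_gen (fun g => exists i, g = w i).

Definition Jideal n (w : form1 n) : S n -> Prop :=
  fun h => exists X : 'I_n.+1 -> S n, h = contr1 X w.

Definition Iideal n (w : form1 n) : S n -> Prop :=
  fun h => exists eta : form1 n, forall i j, h * d1 w i j = wedge11 w eta i j.

(* K = (J . Omega^2_S : dw) = { a : every coefficient of a dw lies in J }. *)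
Definition Kideal n (w : form1 n) : S n -> Prop :=
  fun a => forall i j, Jideal w (a * d1 w i j).

(* Main.v *)
Require Import Defs.
From HB Require Import structures.
From mathcomp Require Import all_boot all_algebra.
From mathcomp Require Import Rstruct complex mpoly.

Set Implicit Arguments.
Unset Strict Implicit.
Unset Printing Implicit Defensive.
Import GRing.Theory.
Local Open Scope ring_scope.

Lemma J_ideal n (w : form1 n) : is_ideal (Jideal w).
Proof.
split; [|split].
- exists (fun _ => 0); rewrite /contr1 big1 // => i _; exact: mul0r.
- move=> a b [X ->] [Y ->]; exists (fun i => X i + Y i).
  by rewrite /contr1 -big_split /=; apply: eq_bigr => i _; rewrite mulrDl.
- move=> r a [X ->]; exists (fun i => r * X i).
  by rewrite /contr1 mulr_sumr; apply: eq_bigr => i _; rewrite mulrA.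
Qed.

Theorem proposition4p7 (n e : nat) (w : form1 n) :
  in_F1 e w ->
  (forall h, Cideal w h <-> Jideal w h) /\
  (forall h, Jideal w h -> Iideal w h) /\
  (forall h, Iideal w h -> Kideal w h).
Proof.
move=> [_ [_ [_ [_ [Hint _]]]]].
split; [|split].
- move=> h; split.
  + move=> Hc; apply: Hc; first exact: J_ideal.
    move=> g [i ->]; exists (fun k => if k == i then 1 else 0).
    rewrite /contr1 (bigD1 i) //= eqxx mul1r big1 ?addr0 // => k /negbTE ->.
    by rewrite mul0r.
  + move=> [X ->] P [P0 [PD PM]] HG.
    apply: (big_ind P) => // i _; apply: PM; apply: HG; by exists i.
- move=> h [X ->]; exists (fun k => \sum_(i < n.+1) X i * d1 w i k).
  move=> j k; rewrite /wedge11 /contr1 mulr_suml !mulr_sumr -sumrB.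
  apply: eq_bigr => i _.
  have := Hint i j k; rewrite /wedge12 => H.
  rewrite -!mulrA !(mulrCA (w _)) -mulrBr; congr (X i * _).
  apply/eqP; rewrite -subr_eq0 -H opprB addrA; apply/eqP.
  by rewrite addrAC.
- move=> h [eta Heta] i j; rewrite Heta /wedge11.
  exists (fun k => (if k == i then eta j else 0) - (if k == j then eta i else 0)).
  rewrite /contr1.
  under eq_bigr => k _ do rewrite mulrBl.
  rewrite sumrB (bigD1 i) //= eqxx big1 ?addr0; last first.
    by move=> k /negbTE ->; rewrite mul0r.
  rewrite (bigD1 j) //= eqxx big1 ?addr0; last first.
    by move=> k /negbTE ->; rewrite mul0r.
  by rewrite ![eta _ * w _]mulrC.
Qed.
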